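(* Let $Z_1,Z_2,\ldots$ be data in a set $\mathbb{Z}$ and $\ell:\Theta\times\mathbb{Z}\to[0,\infty)$ a loss function. Let $\widehat\theta_n$ be an $(\varepsilon,\delta)$-AERM on $Z^n=(Z_1,\ldots,Z_n)$ for all $n$, and suppose there exists $\overline\Omega$ such that $0\le\widehat\omega_n\le\overline\Omega$ for all $n\ge0$. Then for any $n$, $$\sum_{i=1}^n\widehat\omega_{i-1}\ell(\widehat\theta_i;Z_i)\le\overline\Omega\Bigl\{H_n^{(\varepsilon)}\delta+\sum_{i=1}^n\ell(\widehat\theta_n;Z_i)\Bigr\},$$ where $H_n^{(m)}=\sum_{k=1}^n k^{-m}$ is the generalized harmonic number of order $m$.
   Context: Empirical risk $\widehat R_n(\theta)=n^{-1}\sum_{i=1}^n\ell(\theta;Z_i)$. For fixed $\varepsilon,\delta\ge0$, an $(\varepsilon,\delta)$-AERM on $Z^n$ is an estimator $\widehat\theta_n$ with $\widehat R_n(\widehat\theta_n)\le\inf_{\theta\in\Theta}\widehat R_n(\theta)+\delta/n^{1+\varepsilon}$. The $\widehat\omega_n$ are (possibly data-dependent) learning rates. *)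

(* Defs.v *)
From mathcomp Require Import all_boot all_order all_algebra.
From mathcomp Require Import all_classical all_reals all_analysis.
Set Implicit Arguments. Unset Strict Implicit. Unset Printing Implicit Defensive.
Import Order.TTheory GRing.Theory Num.Theory.
Local Open Scope ring_scope.
Local Open Scope classical_set_scope.

(* Empirical risk  R_n(theta) = n^{-1} sum_{i=1}^n loss theta (Z_i);
   the data sequence Z is indexed from 1 (Z 0 is unused). *)
Definition emp_risk {R : realType} {Theta Zt : Type}
  (loss : Theta -> Zt -> R) (Z : nat -> Zt) (n : nat) (th : Theta) : R :=
  (n%:R)^-1 * \sum_(1 <= i < n.+1) loss th (Z i).

Definition is_AERM {R : realType} {Theta Zt : Type}
  (loss : Theta -> Zt -> R) (Z : nat -> Zt) (eps delta : R) (n : nat)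
  (th_hat : Theta) : Prop :=
  emp_risk loss Z n th_hat <=
    inf (range (emp_risk loss Z n)) + delta / (n%:R `^ (1 + eps)).

Definition gen_harmonic {R : realType} (m : R) (n : nat) : R :=
  \sum_(1 <= k < n.+1) (k%:R `^ m)^-1.

(* Main.v *)
Require Import Defs.
From mathcomp Require Import all_boot all_order all_algebra.
From mathcomp Require Import all_classical all_reals all_analysis.
Import Order.TTheory GRing.Theory Num.Theory.
Local Open Scope ring_scope.

Theorem lemma3 (R : realType) (Theta Zt : Type)
  (loss : Theta -> Zt -> R) (Z : nat -> Zt) (eps delta : R)
  (th_hat : nat -> Theta) (omega : nat -> R) (Omega_bar : R) :
  0 <= eps -> 0 <= delta ->
  (forall th z, 0 <= loss th z) ->
  (forall n, (1 <= n)%N -> is_AERM loss Z eps delta n (th_hat n)) ->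
  (forall n, 0 <= omega n <= Omega_bar) ->
  forall n : nat,
    \sum_(1 <= i < n.+1) omega i.-1 * loss (th_hat i) (Z i) <=
    Omega_bar * (gen_harmonic eps n * delta
                 + \sum_(1 <= i < n.+1) loss (th_hat n) (Z i)).
Proof.
move=> eps0 delta0 loss0 aerm om n.
pose S k th := \sum_(1 <= i < k.+1) loss th (Z i).
have S0 : forall k th, 0 <= S k th.
  by move=> k th; apply: sumr_ge0 => i _; apply: loss0.
have step : forall k, (1 <= k)%N -> forall th,
    S k (th_hat k) <= S k th + delta / (k%:R `^ eps).
  move=> k k1 th.
  have c0 : 0 < k%:R :> R by rewrite ltr0n.
  have := aerm k k1; rewrite /is_AERM /emp_risk -/(S k _) => H.
  have hinf : inf (range (emp_risk loss Z k)) <= k%:R^-1 * S k th.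
    apply: ge_inf; last by exists th.
    exists 0 => _ [t _ <-]; rewrite /emp_risk mulr_ge0 ?invr_ge0 ?ler0n //.
    exact: S0.
  have H2 := le_trans H (lerD hinf (lexx _)).
  rewrite -(ler_pM2l c0) mulrA mulfV ?gt_eqF // mul1r mulrDr mulrA mulfV ?gt_eqF //
    mul1r in H2.
  apply: (le_trans H2); rewrite lerD2l.
  rewrite powRD; last by apply/implyP => _; rewrite gt_eqF.
  rewrite powRr1 ?ler0n // invfM mulrCA.
  by rewrite mulVKf ?gt_eqF.
have btl : forall m th, \sum_(1 <= i < m.+1) loss (th_hat i) (Z i) <=
    S m th + gen_harmonic eps m * delta.
  elim=> [|m IH] th.
    by rewrite /S /gen_harmonic !big_geq // mul0r addr0.
  have -> : gen_harmonic eps m.+1 = gen_harmonic eps m + (m.+1%:R `^ eps)^-1.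
    by rewrite /gen_harmonic big_nat_recr.
  rewrite big_nat_recr //= mulrDl.
  have IH' := IH (th_hat m.+1).
  apply: (le_trans (lerD IH' (lexx _))).
  rewrite -addrA [_ * delta + _]addrC addrA.
  have -> : S m (th_hat m.+1) + loss (th_hat m.+1) (Z m.+1) = S m.+1 (th_hat m.+1).
    by rewrite /S [in RHS]big_nat_recr.
  rewrite [_ * delta + _]addrC addrA lerD2r mulrC.
  by rewrite step.
have Om0 : 0 <= Omega_bar by case/andP: (om 0%N) => /le_trans; apply.
apply: (@le_trans _ _ (Omega_bar * \sum_(1 <= i < n.+1) loss (th_hat i) (Z i))).
  rewrite mulr_sumr; apply: ler_sum => i _.
  apply: ler_wpM2r; first exact: loss0.
  by case/andP: (om i.-1).
rewrite addrC; apply: ler_wpM2l => //; exact: btl.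
Qed.
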